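(* Let $\psi$, $s_0$ and $r=r_\psi$ be as in the context, and let $C_r\ge1$ and $s_*$ be such that $r(s_2)\le C_rr(s_1)$ whenever $s_*\le s_1\le s_2\le s_1+s_1^\eta$. For each integer $k\ge s_0$ define $$\overline E_k=\{A\in M_{m,n}(\mathbb R/\mathbb Z): g_k\Lambda_A\in\widetilde\Delta_{\omega_1C_rr(k)}\},\qquad \underline E_k=\{A\in M_{m,n}(\mathbb R/\mathbb Z): g_k\Lambda_A\in\widetilde\Delta_{\omega_2C_r^{-1}r(k+1)}\}.$$ Then $\limsup_{k\to\infty}\underline E_k\subset \mathbf{DI}_{\boldsymbol\alpha,\boldsymbol\beta}(\psi)^c\subset\limsup_{k\to\infty}\overline E_k$.
   Context: $d=m+n$; weight vectors $\boldsymbol\alpha\in(\mathbb R_{>0})^m$, $\boldsymbol\beta\in(\mathbb R_{>0})^n$ with coordinates summing to 1; $\omega_1=\max\{m\alpha_i,n\beta_j\}$, $\omega_2=\min\{m\alpha_i,n\beta_j\}$. $g_s=\mathrm{diag}(e^{\alpha_1s},\dots,e^{\alpha_ms},e^{-\beta_1s},\dots,e^{-\beta_ns})$; $\Lambda_A=\begin{pmatrix}I_m&A\\0&I_n\end{pmatrix}\mathbb Z^d$. $X_d$ is the space of unimodular lattices in $\mathbb R^d$; $\Delta(\Lambda)=\sup_{\mathbf v\in\Lambda\setminus\{0\}}\log(1/\|\mathbf v\|)$ (sup norm); $\widetilde\Delta_\rho:=\bigcup_{0\le s<1}g_{-s}\Delta^{-1}[0,\rho]$. Standing assumptions on $\psi$: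 $t_0>1$, $\psi:[t_0,\infty)\to(0,\infty)$ continuous and decreasing, $\frac1{2t}\le\psi(t)<\frac1t$, and there exist $C_\psi\ge1,\eta\in(0,1)$ with $F_\psi(t_2)\le C_\psi F_\psi(t_1)$ for $t_0\le t_1\le t_2\le t_1e^{(\log t_1)^\eta}$, $F_\psi(t)=1-t\psi(t)$. $s_0=\frac md\log t_0-\frac nd\log\psi(t_0)$, and $r(s)=-\frac1d\log(t\psi(t))$ where $t=t(s)$ solves $s=\frac md\log t-\frac nd\log\psi(t)$ (such $C_r,s_*$ exist). $\mathbf{DI}_{\boldsymbol\alpha,\boldsymbol\beta}(\psi)\subset M_{m,n}(\mathbb R/\mathbb Z)$ is the set of $A$ such that for all sufficiently large $t$ there exist $\mathbf p\in\mathbb Z^m,\mathbf q\in\mathbb Z^n\setminus\{0\}$ with $\max_i|(A\mathbf q-\mathbf p)_i|^{1/\alpha_i}<\psi(t)$ and $\max_j|q_j|^{1/\beta_j}<t$. *)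

(* Defs.v *)
From HB Require Import structures.
From mathcomp Require Import all_boot all_order all_algebra.
From mathcomp Require Import all_classical all_reals all_analysis.
Set Implicit Arguments. Unset Strict Implicit. Unset Printing Implicit Defensive.
Import Order.TTheory GRing.Theory Num.Theory numFieldTopology.Exports numFieldNormedType.Exports.
Local Open Scope classical_set_scope.
Local Open Scope ring_scope.

Section Defs.
Variables (R : realType) (m n : nat).
Notation d := (m + n)%N.

Definition supnorm (v : 'cV[R]_d) : R := \big[Num.max/0]_(i < d) `|v i ord0|.

Definition latt (M : 'M[R]_d) : set 'cV[R]_d :=
  [set M *m map_mx (fun z : int => z%:~R) z | z in [set: 'cV[int]_d]].

Definition Xd : set (set 'cV[R]_d) :=
  [set L | exists M : 'M[R]_d, \det M = 1 /\ L = latt M].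

Definition Delta (L : set 'cV[R]_d) : \bar R :=
  ereal_sup [set ((ln (supnorm v)^-1)%:E) | v in L `\ 0].

Definition DeltaInv (rho : R) : set (set 'cV[R]_d) :=
  [set L | Xd L /\ (0 <= Delta L)%E /\ (Delta L <= rho%:E)%E].

Definition gmat (alpha : 'I_m -> R) (beta : 'I_n -> R) (s : R) : 'M[R]_d :=
  diag_mx (row_mx (\row_i expR (alpha i * s)) (\row_j expR (- (beta j * s)))).

Definition gact alpha beta (s : R) (L : set 'cV[R]_d) : set 'cV[R]_d :=
  (fun v => gmat alpha beta s *m v) @` L.

Definition DeltaTilde alpha beta (rho : R) : set (set 'cV[R]_d) :=
  [set L | exists s : R, 0 <= s /\ s < 1 /\
     exists L', DeltaInv rho L' /\ L = gact alpha beta (- s) L'].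

(* Lambda_A = [[I_m, A], [0, I_n]] Z^d ; A is a real representative of a
   point of M_{m,n}(R/Z) *)
Definition latticeA (A : 'M[R]_(m, n)) : set 'cV[R]_d :=
  latt (block_mx 1%:M A 0 1%:M).

Definition omega1 (alpha : 'I_m -> R) (beta : 'I_n -> R) : R :=
  Num.max (\big[Num.max/0]_(i < m) (m%:R * alpha i))
          (\big[Num.max/0]_(j < n) (n%:R * beta j)).

Definition omega2 (alpha : 'I_m -> R) (beta : 'I_n -> R) : R :=
  Num.min (\big[Num.min/omega1 alpha beta]_(i < m) (m%:R * alpha i))
          (\big[Num.min/omega1 alpha beta]_(j < n) (n%:R * beta j)).

Definition Fpsi (psi : R -> R) (t : R) : R := 1 - t * psi t.

Definition psi_standing (psi : R -> R) (t0 Cpsi eta : R) : Prop :=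
  1 < t0 /\
  {within [set t : R | t0 <= t], continuous psi} /\
  (forall t1 t2, t0 <= t1 -> t1 <= t2 -> psi t2 <= psi t1) /\
  (forall t, t0 <= t -> (2 * t)^-1 <= psi t /\ psi t < t^-1) /\
  1 <= Cpsi /\ 0 < eta /\ eta < 1 /\
  (forall t1 t2, t0 <= t1 -> t1 <= t2 -> t2 <= t1 * expR (ln t1 `^ eta) ->
     Fpsi psi t2 <= Cpsi * Fpsi psi t1).

Definition sfun (psi : R -> R) (t : R) : R :=
  m%:R / d%:R * ln t - n%:R / d%:R * ln (psi t).

Definition s0 (psi : R -> R) (t0 : R) : R := sfun psi t0.

Definition tof (psi : R -> R) (t0 : R) (s : R) : R :=
  xget t0 [set t | t0 <= t /\ sfun psi t = s].

Definition rpsi (psi : R -> R) (t0 : R) (s : R) : R :=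
  - (d%:R)^-1 * ln (tof psi t0 s * psi (tof psi t0 s)).

Definition DI alpha beta (psi : R -> R) : set 'M[R]_(m, n) :=
  [set A | exists T : R, forall t, T <= t ->
     exists (p : 'cV[int]_m) (q : 'cV[int]_n), q != 0 /\
       (forall i, `|(A *m map_mx (fun z : int => z%:~R) q
                     - map_mx (fun z : int => z%:~R) p) i ord0| `^ (alpha i)^-1 < psi t) /\
       (forall j, `|((q j ord0)%:~R : R)| `^ (beta j)^-1 < t)].

Definition Ebar alpha beta psi t0 (Cr : R) (k : nat) : set 'M[R]_(m, n) :=
  [set A | DeltaTilde alpha beta (omega1 alpha beta * Cr * rpsi psi t0 k%:R)
             (gact alpha beta k%:R (latticeA A))].

Definition Eunder alpha beta psi t0 (Cr : R) (k : nat) : set 'M[R]_(m, n) :=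
  [set A | DeltaTilde alpha beta (omega2 alpha beta * Cr^-1 * rpsi psi t0 (k.+1)%:R)
             (gact alpha beta k%:R (latticeA A))].

Definition limsupk (lo : R) (E : nat -> set 'M[R]_(m, n)) : set 'M[R]_(m, n) :=
  [set A | forall K : nat, exists k : nat, (K <= k)%N /\ lo <= k%:R /\ E k A].

End Defs.

(* Main.v *)
Require Import Defs.
From HB Require Import structures.
From mathcomp Require Import all_boot all_order all_algebra.
From mathcomp Require Import all_classical all_reals all_analysis.
Import Order.TTheory GRing.Theory Num.Theory numFieldTopology.Exports numFieldNormedType.Exports.
Local Open Scope classical_set_scope.
Local Open Scope ring_scope.
From mathcomp Require Import ring lra.

Lemma card_dff n (B : 'I_n -> nat) :
  #|{dffun forall j : 'I_n, 'I_(B j)}| = (\prod_(j < n) B j)%N.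
Proof.
rewrite card_dep_ffun foldrE big_map big_enum /=.
by apply: eq_bigr => j _; rewrite card_ord.
Qed.

Lemma pigeon (D I : finType) (N : nat) (K : D -> I -> int) :
  (N.+1 ^ #|I| < #|D|)%N ->
  exists x y, x != y /\ forall l, (N.+1%:Z %| K x l - K y l)%Z.
Proof.
move=> hc.
pose phi (x : D) : {ffun I -> 'I_N.+1} :=
  [ffun l => inord (absz (K x l %% N.+1%:Z)%Z)].
case: (pselect (exists x y, x != y /\ forall l, (N.+1%:Z %| K x l - K y l)%Z)) => // H.
have inj : injective phi.
  move=> x y hxy; apply/eqP; apply/negPn/negP => neq; apply: H.
  exists x, y; split => // l.
  have := congr1 (fun f : {ffun I -> 'I_N.+1} => f l) hxy; rewrite /phi !ffunE => /(congr1 val).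
  have hb : forall z, (absz (K z l %% N.+1%:Z)%Z < N.+1)%N.
    move=> z; rewrite -ltz_nat gez0_abs ?modz_ge0 //.
    by rewrite ltz_pmod.
  rewrite /= !inordK ?hb // => /(congr1 (fun k : nat => k%:Z)).
  rewrite !gez0_abs ?modz_ge0 // => e.
  by rewrite -eqz_mod_dvd; apply/eqP.
have := leq_card _ inj; rewrite card_ffun card_ord => h.
by move: (leq_trans hc h); rewrite ltnn.
Qed.


Lemma dirichlet (R : realType) m n (A : 'M[R]_(m,n)) (X : 'I_n -> R) (Y : 'I_m -> R) (c : R) :
  (0 < m + n)%N -> (forall j, 0 < X j) -> (forall i, 0 < Y i) ->
  (\prod_j X j) * (\prod_i Y i) = 1 -> 1 < c ->
  exists (u : 'cV[int]_m) (w : 'cV[int]_n), col_mx u w != 0 /\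
    (forall j, `|((w j 0)%:~R : R)| <= c * X j) /\
    (forall i, `|(A *m map_mx (fun z : int => z%:~R) w + map_mx (fun z : int => z%:~R) u) i 0| <= c * Y i).
Proof.
move=> d0 Xp Yp XY c1.
pose c2 := (1 + c) / 2.
have c21 : 1 < c2 by rewrite /c2; lra.
pose S := \sum_j 2 / ((c - 1) * X j) + \sum_i 2 / ((c - 1) * Y i).
have S1 : forall j, 2 / ((c - 1) * X j) <= S.
  move=> j; rewrite /S -[X in X <= _]addr0; apply: lerD.
    rewrite (bigD1 j) //= lerDl; apply: sumr_ge0 => k _.
    by apply: divr_ge0 => //; apply: mulr_ge0; [lra | exact/ltW].
  by apply: sumr_ge0 => k _; apply: divr_ge0 => //; apply: mulr_ge0; [lra | exact/ltW].
have S2 : forall i, 2 / ((c - 1) * Y i) <= S.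
  move=> i; rewrite /S -[X in X <= _]add0r; apply: lerD.
    by apply: sumr_ge0 => k _; apply: divr_ge0 => //; apply: mulr_ge0; [lra | exact/ltW].
  rewrite (bigD1 i) //= lerDl; apply: sumr_ge0 => k _.
  by apply: divr_ge0 => //; apply: mulr_ge0; [lra | exact/ltW].
pose N := (Num.trunc S).+1.
have NS : S < N%:R by exact: truncnS_gt.
have N0 : 0 < N%:R :> R by rewrite ltr0n.
have aux : forall z : R, 0 < z -> 2 / ((c - 1) * z) <= S ->
    N%:R * c2 * z <= N%:R * c * z - 1.
  move=> z z0 hz.
  have : 2 / ((c - 1) * z) < N%:R by apply: le_lt_trans NS.
  rewrite ltr_pdivrMr; last by apply: mulr_gt0 => //; lra.
  rewrite /c2 => h; nra.
pose B j := Num.trunc (N%:R * c * X j).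
pose C i := Num.trunc (N%:R * c * Y i).
have c0 : 0 < c by lra.
have BX : forall j, (B j)%:R <= N%:R * c * X j /\ N%:R * c2 * X j < (B j)%:R.
  move=> j; have h0 : 0 <= N%:R * c * X j by apply: mulr_ge0; [apply: mulr_ge0|]; apply: ltW.
  split; first by rewrite truncn_le.
  apply: le_lt_trans (aux _ (Xp j) (S1 j)) _.
  have := truncnS_gt (N%:R * c * X j); rewrite -/(B j) -natr1; lra.
have CY : forall i, (C i)%:R <= N%:R * c * Y i /\ N%:R * c2 * Y i < (C i)%:R.
  move=> i; have h0 : 0 <= N%:R * c * Y i by apply: mulr_ge0; [apply: mulr_ge0|]; apply: ltW.
  split; first by rewrite truncn_le.
  apply: le_lt_trans (aux _ (Yp i) (S2 i)) _.
  have := truncnS_gt (N%:R * c * Y i); rewrite -/(C i) -natr1; lra.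
have Nc2 : 0 < N%:R * c2 by apply: mulr_gt0 => //; lra.
have prodlt : (N ^ (m + n) < (\prod_j B j) * (\prod_i C i))%N.
  rewrite -(ltr_nat R) natrM !natr_prod natrX.
  apply: (@lt_le_trans _ _ ((N%:R * c2) ^+ (m + n))).
    rewrite ltrXn2r ?ler0n //; first by rewrite -lt0n.
    by rewrite -[X in X < _]mulr1 ltr_pM2l.
  have -> : (N%:R * c2) ^+ (m + n) = (\prod_j (N%:R * c2 * X j)) * (\prod_i (N%:R * c2 * Y i)).
    rewrite !big_split /= !prodr_const !card_ord mulrACA XY mulr1 exprD mulrC.
    by rewrite /c2 !exprMn.
  apply: ler_pM.
  - by apply: prodr_ge0 => j _; apply: mulr_ge0; [apply: ltW|apply: ltW].
  - by apply: prodr_ge0 => j _; apply: mulr_ge0; [apply: ltW|apply: ltW].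
  - apply: ler_prod => j _; apply/andP; split; last exact/ltW/(BX j).2.
    by apply: mulr_ge0; [apply: ltW|apply: ltW].
  - apply: ler_prod => j _; apply/andP; split; last exact/ltW/(CY j).2.
    by apply: mulr_ge0; [apply: ltW|apply: ltW].
pose D : finType := ({dffun forall j : 'I_n, 'I_(B j)} * {dffun forall i : 'I_m, 'I_(C i)})%type.
pose bv (x : D) : 'cV[R]_n := \col_j ((x.1 j : nat)%:R).
pose fl (x : D) (i : 'I_m) : int := Num.floor (- (A *m bv x) i 0).
pose K (x : D) (l : ('I_m + 'I_n)%type) : int :=
  match l with inl i => fl x i + (x.2 i : nat)%:Z | inr j => (x.1 j : nat)%:Z end.
have cardD : #|D| = ((\prod_j B j) * (\prod_i C i))%N by rewrite card_prod !card_dff.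
have cardI : #|[the finType of ('I_m + 'I_n)%type]| = (m + n)%N by rewrite card_sum !card_ord.
have [x [y [neq dv]]] : exists x y, x != y /\ forall l, (N%:Z %| K x l - K y l)%Z.
  by apply: pigeon; rewrite cardI cardD.
pose wv : 'cV[int]_n := \col_j ((K x (inr j) - K y (inr j)) %/ N%:Z)%Z.
pose uv : 'cV[int]_m := \col_i ((K x (inl i) - K y (inl i)) %/ N%:Z)%Z.
have intn : forall k : nat, ((k%:Z)%:~R : R) = k%:R by move=> k.
have wE : forall j, ((wv j 0)%:~R : R) * N%:R = (x.1 j : nat)%:R - (y.1 j : nat)%:R.
  move=> j; rewrite mxE -intn -rmorphM /= divzK; last exact: (dv (inr j)).
  by rewrite rmorphB /= !intn.
have uE : forall i, ((uv i 0)%:~R : R) * N%:R =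
   ((fl x i)%:~R + (x.2 i : nat)%:R) - ((fl y i)%:~R + (y.2 i : nat)%:R).
  move=> i; rewrite mxE -intn -rmorphM /= divzK; last exact: (dv (inl i)).
  by rewrite rmorphB /= !rmorphD /= !intn.
exists uv, wv; split; [|split].
- apply/negP; rewrite col_mx_eq0 => /andP[/eqP u0 /eqP w0].
  have e1 : x.1 = y.1.
    apply/ffunP => j; apply/val_inj => /=.
    have := wE j; rewrite w0 mxE mul0r => /esym/eqP; rewrite subr_eq0 => /eqP.
    by move/(congr1 (@Num.trunc R)); rewrite !natrK.
  have e2 : x.2 = y.2.
    apply/ffunP => i; apply/val_inj => /=.
    have := uE i; rewrite u0 mxE mul0r /fl /bv e1 => /esym/eqP; rewrite subr_eq0 addrC [X in _ == X]addrC.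
    rewrite (inj_eq (addIr _)) => /eqP.
    by move/(congr1 (@Num.trunc R)); rewrite !natrK.
  by move: neq; rewrite [x]surjective_pairing [y]surjective_pairing e1 e2 eqxx.
- move=> j.
  have hx : (x.1 j : nat)%:R <= (B j)%:R - 1 :> R.
    by rewrite lerBrDr natr1 ler_nat.
  have hy : (y.1 j : nat)%:R <= (B j)%:R - 1 :> R.
    by rewrite lerBrDr natr1 ler_nat.
  have : `|((wv j 0)%:~R : R)| * N%:R < c * X j * N%:R.
    rewrite -[X in _ * X < _]ger0_norm ?ler0n // -normrM wE.
    have : (B j)%:R <= c * X j * N%:R by rewrite [_ * N%:R]mulrC mulrA; exact: (BX j).1.
    have := ler0n R (x.1 j); have := ler0n R (y.1 j).
    move=> ? ? ?; rewrite ltr_norml; apply/andP; split; lra.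
  by rewrite ltr_pM2r // => /ltW.
- move=> i.
  pose h (z : D) := (A *m bv z) i 0 + (fl z i)%:~R + (z.2 i : nat)%:R.
  have hb : forall z : D, (z.2 i : nat)%:R - 1 < h z /\ h z <= (z.2 i : nat)%:R.
    move=> z; have := floor_itv (- (A *m bv z) i 0).
    rewrite -/(fl z i) rmorphD /= => /andP[f1 f2]; rewrite /h; split; lra.
  have hx : (x.2 i : nat)%:R <= (C i)%:R - 1 :> R.
    by rewrite lerBrDr natr1 ler_nat.
  have hy : (y.2 i : nat)%:R <= (C i)%:R - 1 :> R.
    by rewrite lerBrDr natr1 ler_nat.
  have key : (A *m map_mx (fun z : int => z%:~R) wv + map_mx (fun z : int => z%:~R) uv) i 0 * N%:R
      = h x - h y.
    rewrite mxE mulrDl.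
    have -> : (map_mx (fun z : int => z%:~R) uv) i 0 = (uv i 0)%:~R :> R by rewrite mxE.
    rewrite uE.
    have -> : (A *m map_mx (fun z : int => z%:~R) wv) i 0 * N%:R =
        \sum_j A i j * (x.1 j : nat)%:R - \sum_j A i j * (y.1 j : nat)%:R.
      rewrite mxE mulr_suml -sumrB; apply: eq_bigr => j _.
      by rewrite mxE -mulrA wE mulrBr.
    rewrite /h /bv !mxE.
    have e : forall z : D, \sum_j A i j * (\col_j0 ((z.1 j0 : nat)%:R : R)) j 0 = \sum_j A i j * (z.1 j : nat)%:R.
      by move=> z; apply: eq_bigr => j _; rewrite mxE.
    rewrite !e.
    ring.
  have : `|(A *m map_mx (fun z : int => z%:~R) wv + map_mx (fun z : int => z%:~R) uv) i 0| * N%:R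
      < c * Y i * N%:R.
    rewrite -[X in _ * X < _]ger0_norm ?ler0n // -normrM key.
    have : (C i)%:R <= c * Y i * N%:R by rewrite [_ * N%:R]mulrC mulrA; exact: (CY i).1.
    have := ler0n R (x.2 i); have := ler0n R (y.2 i).
    have := hb x; have := hb y.
    move=> [? ?] [? ?] ? ? ?; rewrite ltr_norml; apply/andP; split; lra.
  by rewrite ltr_pM2r // => /ltW.
Qed.


Section GM.
Variables (R : realType) (m n : nat) (alpha : 'I_m -> R) (beta : 'I_n -> R).

Lemma gmatD s s' : gmat alpha beta s *m gmat alpha beta s' = gmat alpha beta (s + s').
Proof.
rewrite /gmat mul_diag_mx; apply/matrixP => i j; rewrite !mxE.
rewrite -[i]splitK; case: (fintype.split i) => k; rewrite !unsplitK /= !mxE mulrnAr.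
  by rewrite -expRD mulrDr.
by rewrite -expRD mulrDr opprD.
Qed.

Lemma gmat0 : gmat alpha beta 0 = 1%:M.
Proof.
rewrite /gmat -diag_const_mx; congr diag_mx; apply/matrixP => i j; rewrite !mxE.
rewrite -[j]splitK; case: (fintype.split j) => k; rewrite !unsplitK /= !mxE;
by rewrite mulr0 ?oppr0 expR0.
Qed.

Lemma det_gmat s : \sum_(i < m) alpha i = 1 -> \sum_(j < n) beta j = 1 ->
  \det (gmat alpha beta s) = 1.
Proof.
move=> ha hb; rewrite /gmat det_diag big_split_ord /=.
under eq_bigr do rewrite row_mxEl mxE.
under [X in _ * X]eq_bigr do rewrite row_mxEr mxE.
rewrite -!expR_sum -expRD sumrN -!mulr_suml ha hb.
by rewrite mul1r addrN expR0.
Qed.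

Lemma gact_comp s s' L : gact alpha beta s (gact alpha beta s' L) = gact alpha beta (s + s') L.
Proof.
rewrite /gact image_comp; apply: eq_imagel => v _ /=.
by rewrite mulmxA gmatD.
Qed.

Lemma gact0 L : gact alpha beta 0 L = L.
Proof.
rewrite /gact gmat0 (_ : (fun v => 1%:M *m v) = id) ?image_id //.
by apply: funext => v; rewrite mul1mx.
Qed.

Lemma gact_latt s M : gact alpha beta s (latt M) = latt (gmat alpha beta s *m M).
Proof.
rewrite /gact /latt image_comp; apply: eq_imagel => v _ /=.
by rewrite mulmxA.
Qed.

Lemma vecE s (A : 'M[R]_(m, n)) (zu : 'cV[int]_m) (zd : 'cV[int]_n) :
  let v := (gmat alpha beta s *m block_mx 1%:M A 0 1%:M) *m
             map_mx (fun z : int => z%:~R) (col_mx zu zd) in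
  (forall i, v (lshift n i) 0 = expR (alpha i * s) *
      (map_mx (fun z : int => z%:~R) zu + A *m map_mx (fun z : int => z%:~R) zd) i 0) /\
  (forall j, v (rshift m j) 0 = expR (- (beta j * s)) * (zd j 0)%:~R).
Proof.
rewrite /= -mulmxA map_col_mx mul_block_col !mul1mx mul0mx add0r /gmat mul_diag_mx.
split => ?; rewrite mxE ?col_mxEu ?col_mxEd ?row_mxEl ?row_mxEr !mxE //.
Qed.

End GM.


Section SN.
Variables (R : realType) (m n : nat).

Lemma supnorm_ge (v : 'cV[R]_(m + n)) i : `|v i 0| <= supnorm v.
Proof. exact: (le_bigmax _ (fun i => `|v i 0|)). Qed.

Lemma supnorm_le (v : 'cV[R]_(m + n)) c : 0 <= c -> (forall i, `|v i 0| <= c) -> supnorm v <= c.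
Proof. by move=> c0 h; apply: bigmax_le. Qed.

Lemma supnorm_lt (v : 'cV[R]_(m + n)) c : 0 < c -> (forall i, `|v i 0| < c) -> supnorm v < c.
Proof. by move=> c0 h; apply: bigmax_lt. Qed.

Lemma supnorm_gt0 (v : 'cV[R]_(m + n)) : v != 0 -> 0 < supnorm v.
Proof.
move=> nz; have [i hi] : exists i, v i 0 != 0.
  apply/not_existsP => h; move/negP: nz; apply; apply/eqP/matrixP => i j.
  rewrite (ord1 j) mxE; apply/eqP; apply/negPn/negP => h'; apply: (h i) => //.
by apply: lt_le_trans (supnorm_ge v i); rewrite normr_gt0.
Qed.

Lemma Delta_le (L : set 'cV[R]_(m + n)) rho :
  (forall v, L v -> v != 0 -> expR (- rho) <= supnorm v) -> (Delta L <= rho%:E)%E.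
Proof.
move=> h; apply: ge_ereal_sup => _ [v [Lv nz] <-]; rewrite lee_fin.
have nz' : v != 0 by apply/eqP.
have p := supnorm_gt0 _ nz'.
rewrite lnV ?posrE // lerNl -(expRK (- rho)) ler_ln ?posrE ?expR_gt0 //.
exact: h.
Qed.

Lemma Delta_le_inv (L : set 'cV[R]_(m + n)) rho v :
  (Delta L <= rho%:E)%E -> L v -> v != 0 -> expR (- rho) <= supnorm v.
Proof.
move=> hD Lv nz.
have p := supnorm_gt0 _ nz.
have : ((ln (supnorm v)^-1)%:E <= Delta L)%E.
  apply: ereal_sup_ubound; exists v => //; split => //; exact/eqP.
move=> /le_trans /(_ hD); rewrite lee_fin lnV ?posrE // lerNl.
by move=> h; rewrite -[X in _ <= X]lnK ?posrE // ler_expR.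
Qed.

Lemma Delta_ge0 (L : set 'cV[R]_(m + n)) :
  (forall e, 0 < e -> exists v, L v /\ v != 0 /\ supnorm v <= expR e) -> (0 <= Delta L)%E.
Proof.
move=> h.
have H : forall e, 0 < e -> ((- e)%:E <= Delta L)%E.
  move=> e e0; have [v [Lv [nz hv]]] := h e e0.
  have p := supnorm_gt0 _ nz.
  apply: le_ereal_sup_tmp; exists (ln (supnorm v)^-1)%:E.
    exists v => //; split => //; exact/eqP.
  rewrite lee_fin lnV ?posrE // lerN2 -(expRK e) ler_ln ?posrE ?expR_gt0 //.
move: H; case: (Delta L) => [r| |] H //.
- rewrite lee_fin leNgt; apply/negP => r0.
  have := H (- r / 2); rewrite lee_fin => /(_ _); lra.
- by have := H 1 ltr01.
Qed.

Lemma latt_nz (M : 'M[R]_(m + n)) (z : 'cV[int]_(m + n)) :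
  \det M = 1 -> z != 0 -> M *m map_mx (fun k : int => k%:~R) z != 0.
Proof.
move=> dM; apply: contra => /eqP h.
have uM : M \in unitmx by rewrite unitmxE dM unitr1.
have : map_mx (fun k : int => (k%:~R : R)) z = 0 by rewrite -(mulKmx uM (map_mx _ z)) h mulmx0.
move=> h'; apply/eqP/matrixP => i j; have := congr1 (fun A : 'M[R]_(m + n, 1) => A i j) h'.
by rewrite !mxE => /eqP; rewrite intr_eq0 => /eqP.
Qed.

End SN.


Lemma sum1_pos (R : realType) k (f : 'I_k -> R) : \sum_(i < k) f i = 1 -> (0 < k)%N.
Proof. by case: k f => [|k] f //; rewrite big_ord0 => /eqP; rewrite eq_sym oner_eq0. Qed.

Lemma powR_lt_iff (R : realType) (x a P : R) : 0 <= x -> 0 < a -> 0 < P ->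
  (x `^ a^-1 < P) <-> (x < expR (a * ln P)).
Proof.
move=> x0 a0 P0.
have ha : a^-1 * a = 1 by rewrite mulVf // gt_eqF.
have xe : x = (x `^ a^-1) `^ a by rewrite -powRrM ha powRr1.
have e1 : expR (a * ln P) = P `^ a by rewrite mulrC expRM lnK ?posrE.
split => h.
- rewrite e1 [X in X < _]xe; apply: gt0_ltr_powR => //; rewrite ?nnegrE ?powR_ge0 //; exact: ltW.
- have Pe : P = (expR (a * ln P)) `^ a^-1.
    by rewrite -expRM mulrAC mulfV ?gt_eqF // mul1r lnK ?posrE.
  rewrite Pe; apply: gt0_ltr_powR => //; rewrite ?invr_gt0 ?nnegrE //; exact: ltW.
Qed.

Section Main.
Variables (R : realType) (m n : nat) (alpha : 'I_m -> R) (beta : 'I_n -> R)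
  (psi : R -> R) (t0 Cpsi eta Cr sstar : R).
Hypothesis Hal : forall i, 0 < alpha i.
Hypothesis Hsa : \sum_(i < m) alpha i = 1.
Hypothesis Hbe : forall j, 0 < beta j.
Hypothesis Hsb : \sum_(j < n) beta j = 1.
Hypothesis Hps : psi_standing psi t0 Cpsi eta.
Hypothesis hCr : 1 <= Cr.
Hypothesis hs0 : s0 m n psi t0 <= sstar.
Hypothesis Hr : forall s1 s2, sstar <= s1 -> s1 <= s2 -> s2 <= s1 + s1 `^ eta ->
     rpsi m n psi t0 s2 <= Cr * rpsi m n psi t0 s1.

Let hm : (0 < m)%N. Proof. exact: sum1_pos Hsa. Qed.
Let hn : (0 < n)%N. Proof. exact: sum1_pos Hsb. Qed.

Lemma psi_facts [t : R] : t0 <= t -> 1 < t /\ 0 < psi t /\ psi t < t^-1 /\ (2 * t)^-1 <= psi t.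
Proof.
move=> ht; case: Hps => t01 [_ [_ [hb _]]].
have t1 : 1 < t by lra.
have [h1 h2] := hb t ht; split => //; split => //.
by apply: lt_le_trans h1; rewrite invr_gt0; lra.
Qed.

Let dd : R := (m + n)%:R.
Let dd0 : 0 < dd. Proof. by rewrite /dd ltr0n addn_gt0 hm. Qed.
Let a0 : 0 < m%:R / dd. Proof. by apply: divr_gt0 => //; rewrite ltr0n. Qed.
Let b0 : 0 < n%:R / dd. Proof. by apply: divr_gt0 => //; rewrite ltr0n. Qed.
Let ab : m%:R / dd + n%:R / dd = 1.
Proof. by rewrite -mulrDl -natrD divff // gt_eqF. Qed.

Lemma sfunE t : Defs.sfun m n psi t = m%:R / dd * ln t - n%:R / dd * ln (psi t).
Proof. by []. Qed.

Lemma sfun_ge [t : R] : t0 <= t -> ln t <= Defs.sfun m n psi t.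
Proof.
move=> ht; have [t1 [p0 [pl _]]] := psi_facts ht.
have l1 : ln (psi t) <= - ln t.
  rewrite -lnV ?posrE; last lra.
  by apply/ltW; rewrite ltr_ln ?posrE ?invr_gt0 //; lra.
have := ler_wpM2l (ltW b0) l1.
have e : m%:R / dd * ln t + n%:R / dd * ln t = ln t by rewrite -mulrDl ab mul1r.
rewrite sfunE; lra.
Qed.

Lemma sfun_le [t : R] : t0 <= t -> Defs.sfun m n psi t <= ln t + ln 2.
Proof.
move=> ht; have [t1 [p0 [_ pl]]] := psi_facts ht.
have l1 : - (ln 2 + ln t) <= ln (psi t).
  rewrite -lnM ?posrE; [|lra|lra].
  rewrite -lnV ?posrE; last (apply: mulr_gt0; lra).
  by rewrite ler_ln ?posrE ?invr_gt0 //; apply: mulr_gt0; lra.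
have := ler_wpM2l (ltW b0) l1.
have e : m%:R / dd * ln t + n%:R / dd * ln t = ln t by rewrite -mulrDl ab mul1r.
have l2 : 0 <= ln (2 : R) by rewrite ln_ge0 //; lra.
have : n%:R / dd * ln 2 <= ln (2 : R) by rewrite ler_piMl //; have := ab; have := a0; lra.
rewrite sfunE; lra.
Qed.

Lemma sfun_lt [t t' : R] : t0 <= t -> t < t' -> Defs.sfun m n psi t < Defs.sfun m n psi t'.
Proof.
move=> ht tt'; have ht' : t0 <= t' by lra.
have [t1 [p0 _]] := psi_facts ht.
have [t1' [p0' _]] := psi_facts ht'.
case: Hps => _ [_ [hd _]].
have l1 : ln t < ln t' by rewrite ltr_ln ?posrE //; lra.
have l2 : ln (psi t') <= ln (psi t) by rewrite ler_ln ?posrE //; apply: hd => //; lra.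
have : m%:R / dd * ln t < m%:R / dd * ln t' by rewrite ltr_pM2l.
have := ler_wpM2l (ltW b0) l2.
rewrite !sfunE; lra.
Qed.

Lemma sfun_cont b : {within `[t0, b], continuous (Defs.sfun m n psi)}.
Proof.
have sub : `[t0, b] `<=` [set t : R | t0 <= t].
  by move=> x /=; rewrite in_itv /= => /andP[].
have cpsi : {within `[t0, b], continuous psi}.
  by apply: continuous_subspaceW sub _; case: Hps => _ [].
have cl : {within `[t0, b], continuous (@ln R)}.
  apply: continuous_in_subspaceT => x; rewrite inE => /sub /psi_facts [x1 _].
  by apply: continuous_ln; lra.
have clp : {within `[t0, b], continuous (@ln R \o psi)}.
  apply: within_continuous_comp => //.
  move=> y; rewrite inE => -[x Ax <-].
  have := sub x Ax => /psi_facts [_ [px _]].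
  exact: continuous_ln.
move=> x.
have h1 := @continuousM R (subspace `[t0, b]) (cst (m%:R / dd)) (from_subspace `[t0, b] (@ln R)) x (@cst_continuous _ _ _ x) (cl x).
have h2 := @continuousM R (subspace `[t0, b]) (cst (n%:R / dd)) (from_subspace `[t0, b] (@ln R \o psi)) x (@cst_continuous _ _ _ x) (clp x).
exact: (continuousB h1 h2).
Qed.

Lemma sfun_exists [s : R] : Defs.sfun m n psi t0 <= s -> exists t, t0 <= t /\ Defs.sfun m n psi t = s.
Proof.
move=> hs.
pose b := expR s + t0.
have t01 : 1 < t0 by case: Hps.
have es := expR_gt0 s.
have hb : t0 <= b by rewrite /b; lra.
have sb : s <= Defs.sfun m n psi b.
  apply: le_trans (sfun_ge hb).
  rewrite -[X in X <= _](expRK s) ler_ln ?posrE //; rewrite /b; lra.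
have hv : Num.min (Defs.sfun m n psi t0) (Defs.sfun m n psi b) <= s <=
    Num.max (Defs.sfun m n psi t0) (Defs.sfun m n psi b).
  by rewrite ge_min le_max hs sb orbT.
have [c hc e] := IVT hb (sfun_cont b) hv.
rewrite in_itv /= in hc; case/andP: hc => ? ?.
by exists c.
Qed.

Lemma tof_spec [s : R] : Defs.sfun m n psi t0 <= s ->
  t0 <= tof m n psi t0 s /\ Defs.sfun m n psi (tof m n psi t0 s) = s.
Proof.
move=> hs; rewrite /tof.
have h := sfun_exists hs. have := @xgetPex _ t0 [set t | t0 <= t /\ Defs.sfun m n psi t = s]. move=> /(_ h). by [].
Qed.

Lemma tof_sfun [t : R] : t0 <= t -> tof m n psi t0 (Defs.sfun m n psi t) = t.
Proof.
move=> ht; apply: xget_unique => // y [hy e].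
case: (ltgtP y t) => // h.
- by have := sfun_lt hy h; rewrite e ltxx.
- by have := sfun_lt ht h; rewrite e ltxx.
Qed.


Lemma rpsiE [t : R] : t0 <= t ->
  rpsi m n psi t0 (Defs.sfun m n psi t) = - dd^-1 * ln (t * psi t).
Proof. by move=> ht; rewrite /rpsi tof_sfun. Qed.

Lemma rpsi_gt0 [t : R] : t0 <= t -> 0 < - dd^-1 * ln (t * psi t).
Proof.
move=> ht; have [t1 [p0 [pl _]]] := psi_facts ht.
rewrite mulNr -mulrN; apply: mulr_gt0; first by rewrite invr_gt0.
have tp : 0 < t by lra.
have : t * psi t < t * t^-1 by rewrite ltr_pM2l.
rewrite mulfV ?gt_eqF // => h.
rewrite oppr_gt0 ln_lt0 //; apply/andP; split => //; exact: mulr_gt0.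
Qed.

Lemma ident1 t : t0 <= t ->
  Defs.sfun m n psi t + ln (psi t) = - (m%:R * (- dd^-1 * ln (t * psi t))).
Proof.
move=> ht; have [t1 [p0 _]] := psi_facts ht.
rewrite sfunE lnM ?posrE; [|lra|lra].
have dn : dd != 0 by rewrite gt_eqF.
move: dn; rewrite /dd natrD => dn; field.
by [].
Qed.

Lemma ident2 t : t0 <= t ->
  ln t - Defs.sfun m n psi t = - (n%:R * (- dd^-1 * ln (t * psi t))).
Proof.
move=> ht; have [t1 [p0 _]] := psi_facts ht.
rewrite sfunE lnM ?posrE; [|lra|lra].
have dn : dd != 0 by rewrite gt_eqF.
move: dn; rewrite /dd natrD => dn; field.
by [].
Qed.

Lemma omega_facts : 0 < omega2 alpha beta /\
  (forall i, omega2 alpha beta <= m%:R * alpha i /\ m%:R * alpha i <= omega1 alpha beta) /\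
  (forall j, omega2 alpha beta <= n%:R * beta j /\ n%:R * beta j <= omega1 alpha beta).
Proof.
have le1 : forall i, m%:R * alpha i <= omega1 alpha beta.
  move=> i; rewrite /omega1 le_max; apply/orP; left.
  exact: (le_bigmax _ (fun i => m%:R * alpha i)).
have le2 : forall j, n%:R * beta j <= omega1 alpha beta.
  move=> j; rewrite /omega1 le_max; apply/orP; right.
  exact: (le_bigmax _ (fun j => n%:R * beta j)).
have p1 : forall i, 0 < m%:R * alpha i by move=> i; apply: mulr_gt0; rewrite ?ltr0n.
have p2 : forall j, 0 < n%:R * beta j by move=> j; apply: mulr_gt0; rewrite ?ltr0n.
have w0 : 0 < omega1 alpha beta by apply: lt_le_trans (le1 (Ordinal hm)).
split; [|split].
- rewrite /omega2 lt_min; apply/andP; split; apply: lt_bigmin => // *; by [apply: p1|apply: p2].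
- move=> i; split => //; rewrite /omega2 ge_min; apply/orP; left.
  exact: bigmin_le.
- move=> j; split => //; rewrite /omega2 ge_min; apply/orP; right.
  exact: bigmin_le.
Qed.

Lemma linkL (A : 'M[R]_(m, n)) t (zu : 'cV[int]_m) (zd : 'cV[int]_n) i : t0 <= t ->
  let s := Defs.sfun m n psi t in
  let r := - dd^-1 * ln (t * psi t) in
  let v := (gmat alpha beta s *m block_mx 1%:M A 0 1%:M) *m
             map_mx (fun z : int => z%:~R) (col_mx zu zd) in
  `|v (lshift n i) 0| < expR (- (m%:R * alpha i * r)) <->
  `|(A *m map_mx (fun z : int => z%:~R) zd - map_mx (fun z : int => z%:~R) (- zu)) i 0|
     `^ (alpha i)^-1 < psi t.
Proof.
move=> ht s r v.
have [t1 [p0 _]] := psi_facts ht.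
have [vl _] := @vecE _ _ _ alpha beta s A zu zd.
rewrite /v vl.
set x := (map_mx _ zu + A *m map_mx _ zd) i 0.
have ex : (A *m map_mx (fun z : int => z%:~R) zd - map_mx (fun z : int => (z%:~R : R)) (- zu)) i 0 = x.
  by rewrite /x !mxE rmorphN /= opprK addrC.
rewrite ex powR_lt_iff //.
have -> : - (m%:R * alpha i * r) = alpha i * s + alpha i * ln (psi t).
  rewrite -mulrDr ident1 // /r; ring.
rewrite expRD normrM ger0_norm ?expR_ge0 // ltr_pM2l ?expR_gt0 //.
Qed.

Lemma linkR (A : 'M[R]_(m, n)) t (zu : 'cV[int]_m) (zd : 'cV[int]_n) j : t0 <= t ->
  let s := Defs.sfun m n psi t in
  let r := - dd^-1 * ln (t * psi t) in
  let v := (gmat alpha beta s *m block_mx 1%:M A 0 1%:M) *m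
             map_mx (fun z : int => z%:~R) (col_mx zu zd) in
  `|v (rshift m j) 0| < expR (- (n%:R * beta j * r)) <->
  `|((zd j 0)%:~R : R)| `^ (beta j)^-1 < t.
Proof.
move=> ht s r v.
have [t1 [p0 _]] := psi_facts ht.
have [_ vr] := @vecE _ _ _ alpha beta s A zu zd.
rewrite /v vr powR_lt_iff //; last lra.
have -> : - (n%:R * beta j * r) = - (beta j * s) + beta j * ln t.
  have := ident2 t ht; rewrite -/s -/r => e.
  have -> : - (beta j * s) + beta j * ln t = beta j * (ln t - s) by ring.
  rewrite e; ring.
rewrite expRD normrM ger0_norm ?expR_ge0 // ltr_pM2l ?expR_gt0 //.
Qed.

Lemma detM s (A : 'M[R]_(m, n)) : \det (gmat alpha beta s *m block_mx 1%:M A 0 1%:M) = 1.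
Proof. by rewrite det_mulmx (det_gmat _ _ _ alpha beta s Hsa Hsb) det_ublock !det1 !mul1r. Qed.

Lemma sfun_le_t [t : R] : t0 <= t -> Defs.sfun m n psi t <= t.
Proof.
move=> ht; have [t1 _] := psi_facts ht.
have := sfun_le ht.
have : ln (2 : R) <= 1 by have := @le_ln1Dx R 1 ltac:(lra); rewrite (_ : 1 + 1 = 2) //.
have : ln t <= t - 1 by have := @le_ln1Dx R (t - 1) ltac:(lra); rewrite addrC subrK.
lra.
Qed.

Lemma powR_ge1 [x : R] : 1 <= x -> 1 <= x `^ eta.
Proof.
move=> x1; have eta0 : 0 <= eta by case: Hps => _ [_ [_ [_ [_ [? _]]]]]; apply: ltW.
by rewrite -(powRr0 x) ler_powR.
Qed.

Lemma incl1 : limsupk (s0 m n psi t0) (Eunder alpha beta psi t0 Cr) `<=` ~` DI alpha beta psi.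
Proof.
move=> A HA [T HT].
have [w2 [wi wj]] := omega_facts.
have t01 : 1 < t0 by case: Hps.
pose K := (Num.trunc (`|T| + `|sstar|)).+1.
have KT : `|T| + `|sstar| < K%:R by apply: truncnS_gt.
have [k [Kk [s0k Ek]]] := HA K.
case: Ek => s' [s'0 [s'1 [L' [DL' EL]]]].
pose s := k%:R + s'.
have kK : K%:R <= k%:R :> R by rewrite ler_nat.
have aT := ler_norm T; have as_ := ler_norm sstar; have aT0 := normr_ge0 T; have as0 := normr_ge0 sstar.
have s0s : Defs.sfun m n psi t0 <= s by rewrite /s; move: s0k; rewrite /s0; lra.
have [tt0 st] := tof_spec s0s.
move: tt0 st; set t := tof m n psi t0 s => tt0 st.
have tT : T <= t by have := sfun_le_t tt0; rewrite st /s; lra.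
have [p [q [q0 [hp hq]]]] := HT t tT.
have L'E : L' = gact alpha beta s (latticeA A).
  have := congr1 (gact alpha beta s') EL; rewrite !gact_comp addrN gact0 => <-.
  by rewrite /s addrC.
pose M := gmat alpha beta s *m block_mx 1%:M A 0 1%:M.
pose z := col_mx (- p) q.
pose v := M *m map_mx (fun k : int => k%:~R) z.
have Lv : L' v by rewrite L'E /latticeA gact_latt; exists z.
have vnz : v != 0.
  by apply: latt_nz; [exact: detM | rewrite col_mx_eq0 negb_and q0 orbT].
case: DL' => _ [_ DL].
have := Delta_le_inv _ _ _ _ _ _ DL Lv vnz.
apply/negP; rewrite -ltNge.
pose r := - dd^-1 * ln (t * psi t).
have rE : rpsi m n psi t0 s = r by rewrite -st rpsiE.
have r0 : 0 < r := rpsi_gt0 tt0.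
have K1 : 1 <= K%:R :> R by rewrite ler1n.
have s1 : 1 <= s by rewrite /s; lra.
have hk : rpsi m n psi t0 (k.+1)%:R <= Cr * r.
  have e1 : (k.+1)%:R = k%:R + 1 :> R by rewrite -natr1.
  have := powR_ge1 s1 => pe.
  rewrite -rE; apply: Hr; rewrite ?e1 /s; lra.
have Cr0 : 0 < Cr by apply: lt_le_trans hCr.
have rhole : omega2 alpha beta * Cr^-1 * rpsi m n psi t0 (k.+1)%:R <= omega2 alpha beta * r.
  rewrite -mulrA; apply: ler_wpM2l; first exact: ltW.
  by rewrite ler_pdivrMl.
apply: (@lt_le_trans _ _ (expR (- (omega2 alpha beta * r)))); last by rewrite ler_expR lerN2.
apply: supnorm_lt; first exact: expR_gt0.
move=> l; rewrite -[l]splitK; case: (fintype.split l) => i /=.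
- have := (linkL A t (- p) q i tt0).2; rewrite opprK => /(_ (hp i)).
  rewrite st -/M -/z -/v => h; apply: lt_le_trans h _.
  by rewrite ler_expR lerN2 ler_pM2r //; exact: (wi i).1.
- have := (linkR A t (- p) q i tt0).2 => /(_ (hq i)).
  rewrite st -/M -/z -/v => h; apply: lt_le_trans h _.
  by rewrite ler_expR lerN2 ler_pM2r //; exact: (wj i).1.
Qed.

Lemma incl2 : ~` DI alpha beta psi `<=` limsupk (s0 m n psi t0) (Ebar alpha beta psi t0 Cr).
Proof.
move=> A nDI K.
have [w2 [wi wj]] := omega_facts.
have w1 : 0 < omega1 alpha beta.
  by apply: lt_le_trans (wi (Ordinal hm)).2; apply: mulr_gt0; rewrite ?ltr0n.
have t01 : 1 < t0 by case: Hps.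
pose X0 := `|sstar| + `|s0 m n psi t0| + K%:R + 2.
pose T := expR X0 + t0.
have [t [tT ht]] : exists t, T <= t /\ forall (p : 'cV[int]_m) (q : 'cV[int]_n), ~ (q != 0 /\
       (forall i, `|(A *m map_mx (fun z : int => z%:~R) q
                     - map_mx (fun z : int => z%:~R) p) i ord0| `^ (alpha i)^-1 < psi t) /\
       (forall j, `|((q j ord0)%:~R : R)| `^ (beta j)^-1 < t)).
  apply: contrapT => H; apply: nDI; exists T => t tT.
  apply: contrapT => H2; apply: H; exists t; split => // p q hpq; apply: H2.
  by exists p, q.
have eX := expR_gt0 X0.
have tt0 : t0 <= t by rewrite /T in tT; lra.
have [t1 [pt0 _]] := psi_facts tt0.
pose s := Defs.sfun m n psi t.
have Xs : X0 <= s.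
  apply: le_trans (sfun_ge tt0).
  rewrite -[X in X <= _](expRK X0) ler_ln ?posrE //; rewrite /T in tT; lra.
have aS := ler_norm sstar; have aS0 := normr_ge0 sstar.
have a0' := ler_norm (s0 m n psi t0); have a00 := normr_ge0 (s0 m n psi t0).
have K0 : 0 <= K%:R :> R by rewrite ler0n.
have s0' : 0 <= s by rewrite /X0 in Xs; lra.
pose k := Num.trunc s.
have /andP[ks sk] := truncn_itv s0'.
rewrite -/k -natr1 in ks sk.
exists k; split; [|split].
- by rewrite truncn_ge_nat //; rewrite /X0 in Xs; lra.
- by rewrite /X0 in Xs; lra.
exists (s - k%:R); split; [lra|split; [lra|]].
pose M := gmat alpha beta s *m block_mx 1%:M A 0 1%:M.
exists (gact alpha beta s (latticeA A)); split; last first.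
  by rewrite gact_comp; congr gact; ring.
have LE : gact alpha beta s (latticeA A) = latt M by rewrite /latticeA gact_latt.
split; [|split].
- by exists M; split => //; exact: detM.
- apply: Delta_ge0 => e e0.
  have c1 : 1 < expR e by rewrite -expR0 ltr_expR.
  have XY : (\prod_j expR (beta j * s)) * (\prod_i expR (- (alpha i * s))) = 1.
    rewrite -!expR_sum -expRD sumrN -!mulr_suml Hsa Hsb.
    by rewrite mul1r addrN expR0.
  have d0 : (0 < m + n)%N by rewrite addn_gt0 hm.
  have [u [w [nz [hw hu]]]] := dirichlet _ _ _ A (fun j => expR (beta j * s))
     (fun i => expR (- (alpha i * s))) (expR e) d0 (fun j => expR_gt0 _) (fun i => expR_gt0 _) XY c1.
  exists (M *m map_mx (fun k : int => k%:~R) (col_mx u w)); split; [|split].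
  + by rewrite LE; exists (col_mx u w).
  + by apply: latt_nz => //; exact: detM.
  + apply: supnorm_le; first exact: expR_ge0.
    have [vl vr] := @vecE _ _ _ alpha beta s A u w.
    move=> l; rewrite -[l]splitK; case: (fintype.split l) => i /=.
    * rewrite vl normrM ger0_norm ?expR_ge0 // addrC.
      apply: le_trans (ler_wpM2l (expR_ge0 _) (hu i)) _.
      by rewrite mulrCA -expRD addrN expR0 mulr1.
    * rewrite vr normrM ger0_norm ?expR_ge0 //.
      apply: le_trans (ler_wpM2l (expR_ge0 _) (hw i)) _.
      by rewrite mulrCA -expRD addNr expR0 mulr1.
- rewrite LE; apply: Delta_le => _ [z _ <-] vnz.
  rewrite -(vsubmxK z) in vnz *.
  move: vnz; set zu := usubmx z; set zd := dsubmx z => vnz.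
  pose r := - dd^-1 * ln (t * psi t).
  have rE : rpsi m n psi t0 s = r by rewrite rpsiE.
  have r0 : 0 < r := rpsi_gt0 tt0.
  have k1 : 1 <= k%:R :> R by rewrite /X0 in Xs; lra.
  have hk : r <= Cr * rpsi m n psi t0 k%:R.
    have := powR_ge1 k1 => pe.
    rewrite -rE; apply: Hr; rewrite /X0 in Xs; lra.
  have rhole : omega1 alpha beta * r <= omega1 alpha beta * Cr * rpsi m n psi t0 k%:R.
    by rewrite -mulrA; apply: ler_wpM2l => //; exact: ltW.
  rewrite leNgt; apply/negP => hlt.
  have hc : forall l, `|(M *m map_mx (fun k : int => k%:~R) (col_mx zu zd)) l 0| <
      expR (- (omega1 alpha beta * r)).
    move=> l; apply: le_lt_trans (supnorm_ge _ _ _ _ l) _.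
    by apply: lt_le_trans hlt _; rewrite ler_expR lerN2.
  have [vl vr] := @vecE _ _ _ alpha beta s A zu zd.
  have e1 : expR (- (omega1 alpha beta * r)) < 1.
    by rewrite -expR0 ltr_expR oppr_lt0; apply: mulr_gt0.
  case: (eqVneq zd 0) => [zd0 | zdn].
  + have zun : zu != 0.
      apply: contraNneq vnz => zu0.
      by rewrite zu0 zd0 col_mx0 map_mx0 mulmx0.
    have [i hi] : exists i, zu i 0 != 0.
      apply/not_existsP => h; move/negP: zun; apply; apply/eqP/matrixP => i j.
      rewrite (ord1 j) [X in _ = X]mxE; apply/eqP; apply/negPn/negP => h'; exact: (h i).
    have := hc (lshift n i); rewrite vl zd0 map_mx0 mulmx0 addr0 mxE.
    apply/negP; rewrite -leNgt; apply: le_trans (ltW e1) _.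
    rewrite normrM ger0_norm ?expR_ge0 //.
    apply: (@le_trans _ _ (1 * 1)); first by rewrite mulr1.
    apply: ler_pM => //.
      rewrite -expR0 ler_expR; apply: mulr_ge0 => //; exact: ltW.
    apply: norm_intr_ge1; last by rewrite intr_eq0.
    exact: intr_int.
  + apply: (ht (- zu) zd); split => //; split.
    * move=> i; apply: (linkL A t zu zd i tt0).1.
      apply: lt_le_trans (hc (lshift n i)) _.
      by rewrite ler_expR lerN2 ler_pM2r //; exact: (wi i).2.
    * move=> j; apply: (linkR A t zu zd j tt0).1.
      apply: lt_le_trans (hc (rshift m j)) _.
      by rewrite ler_expR lerN2 ler_pM2r //; exact: (wj j).2.
Qed.

End Main.


Theorem lemma3p5 (R : realType) (m n : nat) (alpha : 'I_m -> R) (beta : 'I_n -> R)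
  (psi : R -> R) (t0 Cpsi eta Cr sstar : R) :
  (forall i, 0 < alpha i) -> \sum_(i < m) alpha i = 1 ->
  (forall j, 0 < beta j) -> \sum_(j < n) beta j = 1 ->
  psi_standing psi t0 Cpsi eta ->
  1 <= Cr -> s0 m n psi t0 <= sstar ->
  (forall s1 s2, sstar <= s1 -> s1 <= s2 -> s2 <= s1 + s1 `^ eta ->
     rpsi m n psi t0 s2 <= Cr * rpsi m n psi t0 s1) ->
  limsupk (s0 m n psi t0) (Eunder alpha beta psi t0 Cr)
    `<=` ~` DI alpha beta psi /\
  ~` DI alpha beta psi
    `<=` limsupk (s0 m n psi t0) (Ebar alpha beta psi t0 Cr).
Proof.
move=> ha sa hb sb Hps hCr hs0 Hr.
split.
- exact: (@incl1 R m n alpha beta psi t0 Cpsi eta Cr sstar ha sa hb sb Hps hCr Hr).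
- exact: (@incl2 R m n alpha beta psi t0 Cpsi eta Cr sstar ha sa hb sb Hps Hr).
Qed.
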